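(* Let $F\in\mathcal L_n$ be real with $\|F\|_{\mathsf E}\le1$, $F\not\equiv 0$, and let $D^0=(F)_0+D_n^\infty-(F)_\infty$ be its generalized zero divisor. Then every alternation set of $F$ has at most $n+1-D^0(x_* )$ points.
   Context: Let $\mathsf E\subset\overline{\mathbb R}$ be compact, proper, with infinitely many points. Cyclic order: $(t_0,\dots,t_m)$, $m\ge2$, is cyclically ordered if it has no repetitions and some $f\in\mathrm{PSL}(2,\mathbb R)$ has $f(t_0)=\infty$, $f(t_1)<\dots<f(t_m)$; $(a,b)=\{c:(a,c,b)\text{ cyclically ordered}\}$, $[a,b)=(a,b)\cup\{a\}$. Divisors are finitely supported $D:\overline{\mathbb C}\to\mathbb Z$; for rational $f$, $(f)_\infty$, $(f)_0$ are the polar and zero divisors (both $0$ if $f$ is constant); $\mathcal L(D)=\{f\text{ rational}:(f)_\infty\le D\}$. Fix $n\ge1$, an integral divisor $D_n^\infty\ge0$ of degree $n$ supported in $\overline{\mathbb R}\setminus\mathsf E$, $x_*\in\overline{\mathbb R}\setminus\mathsf E$, $\mathcal L_n=\mathcal L(D_n^\infty)$, $\|F\|_{\mathsf E}=\sup_{\mathsf E}|F|$. Real means $F(\bar z)=\overline{F(z)}$. Sign function: $S_n(x)=\sum_{\mathbf c\ne x_*}D_n^\infty(\mathbf c)\chi_{[x_*,\mathbf c)}(x)$. An alternation set of $F$ is a set of distinct points $x_1,\dots,x_m\in\mathsf E$ with $(x_*,x_1,\dots,x_m)$ cyclically ordered and $F(x_j)=(-1)^{m-j-S_n(x_j)}$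 for all $j$. *)

(* Defs.v *)
From HB Require Import structures.
From mathcomp Require Import all_boot all_order all_algebra.
From mathcomp Require Import all_classical all_reals.
From mathcomp Require Import topology normedtype one_point_compactification.
From mathcomp Require Import complex.
Set Implicit Arguments. Unset Strict Implicit. Unset Printing Implicit Defensive.
Import Order.TTheory GRing.Theory Num.Theory.
Local Open Scope ring_scope.

(* The extended real line  R-bar = R u {oo}  with its one-point
   compactification topology; [None] is the point oo. *)
Notation ext R := (one_point_compactification (R^o)%type).

Section Defs.
Variable R : realType.
Local Notation ext := (ext R).

Definition mobius (a b c d : R) (x : ext) : ext :=
  match x with
  | Some r => if c * r + d == 0 then None else Some ((a * r + b) / (c * r + d))
  | None => if c == 0 then None else Some (a / c)
  end.

Definition ext_lt (x y : ext) : bool :=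
  match x, y with Some a, Some b => a < b | _, _ => false end.

(* (t_0, ..., t_m) is cyclically ordered: no repetitions and some
   f in PSL(2,R) (a d - b c = 1) has f t_0 = oo, f t_1 < ... < f t_m. *)
Definition cyc_ordered (s : seq ext) : Prop :=
  uniq s /\ exists a b c d : R, a * d - b * c = 1 /\
    mobius a b c d (head None s) = None /\
    sorted ext_lt (map (mobius a b c d) (behead s)).

(* x in [a, b) = (a, b) u {a}, where (a, b) = {c | (a, c, b) cyclically ordered} *)
Definition in_cint_co (a b x : ext) : Prop := x = a \/ cyc_ordered [:: a; x; b].

(* The integral divisor D_n^oo >= 0 is given by the multiset Ds of its
   points in R-bar (with multiplicity):  D_n^oo(c) = count_mem c Ds. *)
Definition divD (Ds : seq ext) (c : ext) : nat := count_mem c Ds.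

(* its value at a point of the Riemann sphere: finite complex points
   (D is supported in R-bar, so it vanishes at non-real points) *)
Definition divD_C (Ds : seq ext) (z : R[i]) : nat :=
  count (fun x : ext => if x is Some r then (r%:C)%C == z else false) Ds.

Definition signS (Ds : seq ext) (xs x : ext) : nat :=
  (\sum_(c <- Ds | c != xs) (if `[< in_cint_co xs c x >] then 1 else 0))%N.

Definition cpoly (p : {poly R}) : {poly R[i]} :=
  map_poly (fun r : R => (r%:C)%C) p.

Definition ordC (p q : {poly R}) (z : R[i]) : int :=
  (mup z (cpoly p))%:Z - (mup z (cpoly q))%:Z.

Definition ord_inf (p q : {poly R}) : int := (size q)%:Z - (size p)%:Z.

Definition ordE (p q : {poly R}) (x : ext) : int :=
  match x with Some r => ordC p q (r%:C)%C | None => ord_inf p q end.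

Definition poleC p q z : int := Num.max 0 (- ordC p q z).
Definition pole_inf p q : int := Num.max 0 (- ord_inf p q).
Definition zeroE p q x : int := Num.max 0 (ordE p q x).
Definition poleE p q x : int := Num.max 0 (- ordE p q x).

Definition in_Ln (Ds : seq ext) (p q : {poly R}) : Prop :=
  (forall z : R[i], poleC p q z <= (divD_C Ds z)%:Z) /\
  pole_inf p q <= (divD Ds None)%:Z.

(* value of F = p/q (p, q coprime, q <> 0) at a point of R-bar;
   None means F has a pole there. *)
Definition ratval (p q : {poly R}) (x : ext) : option R :=
  match x with
  | Some r => if q.[r] == 0 then None else Some (p.[r] / q.[r])
  | None => if (size q < size p)%N then None
            else Some (if size p == size q then lead_coef p / lead_coef q
                       else 0)
  end.

Definition genD0 (Ds : seq ext) (p q : {poly R}) (x : ext) : int :=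
  zeroE p q x + (divD Ds x)%:Z - poleE p q x.

Definition alternation_set (E : set ext) (Ds : seq ext) (xstar : ext)
    (p q : {poly R}) (xs : seq ext) : Prop :=
  (forall x, x \in xs -> E x) /\
  cyc_ordered (xstar :: xs) /\
  (forall j : nat, (j < size xs)%N ->
     ratval p q (nth None xs j) =
       Some ((-1) ^ ((size xs)%:Z - (j.+1)%:Z
                     - (signS Ds xstar (nth None xs j))%:Z))).

End Defs.

(* Main.v *)
Require Import Defs.
From HB Require Import structures.
From mathcomp Require Import all_boot all_order all_algebra.
From mathcomp Require Import all_classical all_reals.
From mathcomp Require Import topology normedtype one_point_compactification.
From mathcomp Require Import complex.
From mathcomp Require Import polyrcf.
Import Order.TTheory GRing.Theory Num.Theory.
Local Open Scope ring_scope.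
From mathcomp Require Import ring lra zify.
Lemma closed_dvd (F : closedFieldType) (A B : {poly F}) :
  B != 0 -> (forall z, (mup z A <= mup z B)%N) -> A != 0 -> A %| B.
Proof.
elim: {A} (size A).+1 {-2}A (ltnSn (size A)) B => // N IH A szA B B0 Hm A0.
case: (boolP (size A == 1%N)) => [s1|s1].
  move: s1 => /(@size_poly1P F) [c c0 ->].
  by rewrite -[c%:P]mulr1 mul_polyC dvdpZl // dvd1p.
have /closed_rootP [z rz] := s1.
have [A' eA] := factor_theorem _ _ rz.
have X0 : ('X - z%:P) != 0 by rewrite polyXsubC_eq0.
have A'0 : A' != 0 by apply: contraNneq A0 => e; rewrite eA e mul0r.
have : (0 < mup z B)%N.
  apply: leq_trans (Hm z); rewrite -XsubC_dvd //; by rewrite dvdp_XsubCl.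
rewrite -XsubC_dvd // dvdp_XsubCl => /factor_theorem [B' eB].
have B'0 : B' != 0 by apply: contraNneq B0 => e; rewrite eB e mul0r.
rewrite eA eB dvdp_mul2r //; apply: IH => //.
  rewrite -ltnS (leq_trans _ szA) // eA size_mul // size_XsubC addn2 /=.
  by [].
move=> w; have := Hm w; rewrite eA eB !mupM // leq_add2r //.
Qed.
Section S.
Variable R : realType.
Local Notation ext := (ext R).

Definition Qd (Ds : seq ext) : {poly R} := \prod_(r <- pmap id Ds) ('X - r%:P).

Lemma cpoly_dvd (p q : {poly R}) : (cpoly p %| cpoly q) = (p %| q).
Proof. rewrite /cpoly. exact: dvdp_map. Qed.
Lemma cpoly_coprime (p q : {poly R}) : coprimep (cpoly p) (cpoly q) = coprimep p q.
Proof. rewrite /cpoly. exact: coprimep_map. Qed.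
Lemma cpoly_eq0 (p : {poly R}) : (cpoly p == 0) = (p == 0).
Proof. rewrite /cpoly. exact: map_poly_eq0. Qed.
Lemma cpoly_XsubCX (a : R) k : cpoly (('X - a%:P)^+k) = ('X - (a%:C)%C%:P)^+k.
Proof. rewrite /cpoly rmorphXn /= map_polyXsubC //. Qed.

Lemma cpoly_Qd Ds : cpoly (Qd Ds) =
  \prod_(w <- map (fun r => (r%:C)%C) (pmap id Ds)) ('X - w%:P).
Proof.
rewrite /cpoly /Qd rmorph_prod big_map; apply: eq_bigr => r _.
exact: map_polyXsubC.
Qed.

Lemma count_divD_C Ds z :
  count_mem z (map (fun r : R => (r%:C)%C) (pmap id Ds)) = divD_C Ds z.
Proof.
rewrite /divD_C; elim: Ds => [|[r|] Ds IH] //=.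
by rewrite IH eq_sym.
Qed.

Lemma mup_q_le Ds (p q : {poly R}) z : q != 0 -> coprimep p q -> in_Ln Ds p q ->
  (mup z (cpoly q) <= divD_C Ds z)%N.
Proof.
move=> q0 cpq [HL _]; have := HL z; rewrite /poleC /ordC.
have [->|mq0] := eqVneq (mup z (cpoly q)) 0%N; first by [].
have rq : root (cpoly q) z.
  by rewrite -dvdp_XsubCl XsubC_dvd ?cpoly_eq0 // lt0n.
have cqp : coprimep (cpoly q) (cpoly p) by rewrite cpoly_coprime coprimep_sym.
have /mupNroot -> := coprimep_root cqp rq.
rewrite sub0r opprK => H; rewrite -lez_nat; apply: le_trans H.
by rewrite le_max lexx orbT.
Qed.

Lemma q_dvd_Qd Ds (p q : {poly R}) : q != 0 -> coprimep p q -> in_Ln Ds p q ->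
  q %| Qd Ds.
Proof.
move=> q0 cpq HL; rewrite -cpoly_dvd; apply: closed_dvd.
- rewrite cpoly_Qd; apply: monic_neq0; exact: monic_prod_XsubC.
- move=> z; rewrite cpoly_Qd mu_prod_XsubC count_divD_C.
  exact: (@mup_q_le Ds p q z q0 cpq HL).
- by rewrite cpoly_eq0.
Qed.

Definition key (xs x : ext) : R :=
  match xs, x with
  | None, Some r => r
  | Some a, Some r => (a - r)^-1
  | _, _ => 0
  end.

Lemma sorted_aff (al be : R) (s : seq R) : 0 < al ->
  sorted (@ext_lt R) (map (fun t => Some (al * t + be) : ext) s) = sorted <%R s.
Proof.
move=> al0; case: s => [|t s] //=; rewrite path_map; apply: eq_path => u v /=.
by rewrite ltrD2r ltr_pM2l.
Qed.

Lemma mob_affine a b c d (xs : ext) : a * d - b * c = 1 ->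
  mobius a b c d xs = None ->
  exists al be : R, 0 < al /\
    forall x, x != xs -> mobius a b c d x = Some (al * key xs x + be).
Proof.
move=> det; case: xs => [s|] /=.
- case: ifP => // /eqP hs _.
  have ed : d = - (c * s) by apply/eqP; rewrite -addr_eq0 addrC hs.
  have c0 : c != 0.
    apply/negP => /eqP c0; move: det; rewrite ed c0; rewrite !(mulr0, mul0r, oppr0, subr0).
    by move/eqP; rewrite eq_sym oner_eq0.
  have eb : b = - c^-1 - a * s.
    apply: (mulfI c0); rewrite mulrBr mulrN mulfV //.
    transitivity (-(a * (-(c*s)) - b*c) - c*(a*s)); first by ring.
    by rewrite -ed det.
  exists (c^-2), (a / c); split; first by rewrite exprnN invr_gt0 exprn_even_gt0.
  case=> [r|] hr /=.
  + have rs : r - s != 0 by rewrite subr_eq0; apply: contra hr => /eqP ->.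
    rewrite ed -mulrN -mulrDr mulf_eq0 (negbTE c0) /= (negbTE rs).
    congr Some; rewrite eb; field.
    by rewrite c0 /= rs andbT; rewrite subr_eq0 eq_sym -subr_eq0.
  + by rewrite (negbTE c0) mulr0 add0r.
- case: ifP => // /eqP c0 _; move: det; rewrite c0 mulr0 subr0 => det.
  have d0 : d != 0 by apply/negP => /eqP d0; move: det; rewrite d0 mulr0 => /eqP; rewrite eq_sym oner_eq0.
  exists (d^-2), (b / d); split; first by rewrite exprnN invr_gt0 exprn_even_gt0.
  case=> [r|] //= _; rewrite mul0r add0r (negbTE d0); congr Some.
  have ea : a = d^-1 by apply: (mulIf d0); rewrite det mulVf.
  rewrite ea; field; done.
Qed.

Lemma mob_std (xs : ext) : exists a b c d : R, a * d - b * c = 1 /\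
  mobius a b c d xs = None /\
  forall x, x != xs -> mobius a b c d x = Some (1 * key xs x + 0).
Proof.
case: xs => [s|].
- exists 0, (-1), 1, (-s); split; first by ring.
  split; first by rewrite /= mul1r subrr eqxx.
  case=> [r|] hr /=.
  + have rs : r - s != 0 by rewrite subr_eq0; apply: contra hr => /eqP ->.
    rewrite mul1r (negbTE rs); congr Some; field.
    by rewrite rs andbT subr_eq0 eq_sym -subr_eq0.
  + by rewrite oner_eq0 mulr0 addr0 mul0r.
- exists 1, 0, 0, 1; split; first by ring.
  split; first by rewrite /= eqxx.
  case=> [r|] // _ /=; rewrite mul0r add0r oner_eq0; congr Some; field; done.
Qed.

Lemma cyc_key (xs : ext) l :
  cyc_ordered (xs :: l) <-> uniq (xs :: l) /\ sorted <%R (map (key xs) l).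
Proof.
have aux : forall a b c d al be, 0 < al -> uniq (xs :: l) ->
    (forall x, x != xs -> mobius a b c d x = Some (al * key xs x + be)) ->
    sorted (@ext_lt R) (map (mobius a b c d) l) = sorted <%R (map (key xs) l).
  move=> a b c d al be al0 /= /andP [nl _] H.
  rewrite -(@sorted_aff al be _ al0) -map_comp; congr sorted; apply/eq_in_map => x xl /=.
  by apply: H; apply: contraNneq nl => <-.
split.
- move=> [u [a [b [c [d [det [hN hs]]]]]]]; split => //.
  have [al [be [al0 H]]] := mob_affine _ _ _ _ _ det hN.
  by rewrite -(aux a b c d al be).
- move=> [u hs]; split => //.
  have [a [b [c [d [det [hN H]]]]]] := mob_std xs.
  exists a, b, c, d; split => //; split => //=.
  by rewrite (aux a b c d 1 0) // ltr01.
Qed.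

Lemma in_cint_key (xs c x : ext) : x != xs -> c != xs -> x != c ->
  (in_cint_co xs c x <-> key xs x < key xs c).
Proof.
move=> hx hc hxc; rewrite /in_cint_co cyc_key /=.
rewrite !inE !negb_or (eq_sym xs x) (eq_sym xs c) hx hc hxc andbT /=.
split.
- by case=> [e|[_ /andP []]] //; move: hx; rewrite e eqxx.
- by move=> h; right; rewrite h.
Qed.

Lemma signS_count Ds (xs x : ext) : x != xs -> x \notin Ds ->
  signS Ds xs x = count (fun c => (c != xs) && (key xs x < key xs c)) Ds.
Proof.
move=> hx; rewrite /signS; elim: Ds => [|c Ds IH]; first by rewrite big_nil.
rewrite inE negb_or big_cons /= => /andP [hxc hD]; rewrite IH //.
case: (eqVneq c xs) => [->|hc] //=.
case: (asboolP (in_cint_co xs c x)) => H.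
  by move/(in_cint_key _ _ _ hx hc hxc): H => ->.
suff -> : (key xs x < key xs c) = false by [].
by apply/negP => /(in_cint_key _ _ _ hx hc hxc).
Qed.

Definition lam (xs c : ext) : R :=
  match xs, c with Some a, Some c' => if c' == a then -1 else a - c' | _, _ => 1 end.
Definition ell (xs c : ext) (y : R) : R :=
  if c == xs then lam xs c else lam xs c * (y - key xs c).
Definition wfun (xs : ext) (Ds : seq ext) (y : R) : R := \prod_(c <- Ds) ell xs c y.

Lemma lam_neq0 xs c : lam xs c != 0.
Proof.
case: xs c => [a|] [c|] //=; try exact: oner_neq0.
case: ifP => [_|/negbT h]; first by rewrite oppr_eq0 oner_neq0.
by rewrite subr_eq0 eq_sym.
Qed.

Lemma w_sign xs Ds y : (forall c, c \in Ds -> c != xs -> y != key xs c) ->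
  0 < wfun xs Ds y * (\prod_(c <- Ds) lam xs c) *
      (-1) ^+ count (fun c => (c != xs) && (y < key xs c)) Ds.
Proof.
rewrite /wfun; elim: Ds => [|c Ds IH] H; first by rewrite !big_nil /= !mul1r ltr01.
rewrite !big_cons /= exprD.
have -> : ell xs c y * wfun xs Ds y * (lam xs c * \prod_(j <- Ds) lam xs j) *
   ((-1) ^+ ((c != xs) && (y < key xs c)) *
    (-1) ^+ count (fun c0 : ext => (c0 != xs) && (y < key xs c0)) Ds) =
   (ell xs c y * lam xs c * (-1) ^+ ((c != xs) && (y < key xs c))) *
   (wfun xs Ds y * \prod_(j <- Ds) lam xs j *
    (-1) ^+ count (fun c0 : ext => (c0 != xs) && (y < key xs c0)) Ds) by rewrite /wfun; ring.
apply: mulr_gt0; last first.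
  by apply: IH => c0 c0D; apply: H; rewrite inE c0D orbT.
have l0 := lam_neq0 xs c.
rewrite /ell; case: (eqVneq c xs) => [_|hc] /=.
  by rewrite expr0 mulr1 -expr2 exprn_even_gt0.
have hy : y != key xs c by apply: H; rewrite ?inE ?eqxx.
have -> : lam xs c * (y - key xs c) * lam xs c * (-1) ^+ (y < key xs c)%R =
  lam xs c ^+ 2 * ((y - key xs c) * (-1) ^+ (y < key xs c)%R) by ring.
apply: mulr_gt0; first by rewrite exprn_even_gt0.
case: (ltrP y (key xs c)) => h /=.
  by rewrite expr1 mulrN1 oppr_gt0 subr_lt0.
by rewrite expr0 mulr1 subr_gt0 lt_neqAle eq_sym hy h.
Qed.

Lemma ivt_chain (T : {poly R}) y0 ys :
  path <%R y0 ys -> path (fun u v => T.[u] * T.[v] < 0) y0 ys ->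
  exists zs, size zs = size ys /\ path <%R y0 zs /\ all (root T) zs.
Proof.
elim: ys y0 => [|y1 ys IH] y0 /=; first by exists [::].
move=> /andP [lt01 hp1] /andP [sg hp].
have [z zin rz] := poly_ivtoo (ltW lt01) sg.
have /andP [z0 z1] : (y0 < z) && (z < y1) by rewrite in_itv /= in zin.
have [zs [sz [pz rzs]]] := IH _ hp1 hp.
exists (z :: zs); split; first by rewrite /= sz.
split; last by rewrite /= rz.
rewrite /= z0 /=; case: zs pz {sz rzs} => [|w zs] //= /andP [yw ->].
by rewrite (lt_trans z1 yw).
Qed.

Lemma neg1z (a b c : nat) :
  (-1 : R) ^ (a%:Z - b%:Z - c%:Z) = (-1) ^+ a * (-1) ^+ b * (-1) ^+ c.
Proof.
have n1 : (-1 : R) != 0 by rewrite oppr_eq0 oner_eq0.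
rewrite !expfzDr // -!exprnN !invr_sign -!exprnP //.
Qed.

Lemma size_Qd Ds : size (Qd Ds) = (size (pmap id Ds)).+1.
Proof. by rewrite /Qd size_prod_XsubC. Qed.

Lemma monic_Qd Ds : Qd Ds \is monic.
Proof. exact: monic_prod_XsubC. Qed.

Lemma size_pmap_None (Ds : seq ext) : (size (pmap id Ds) + count_mem None Ds = size Ds)%N.
Proof. elim: Ds => [|[r|] Ds IH] //=; rewrite -IH /=; lia. Qed.

Lemma Qd_cons_Some r Ds : Qd (Some r :: Ds) = ('X - r%:P) * Qd Ds.
Proof. by rewrite /Qd /= big_cons. Qed.
Lemma Qd_cons_None Ds : Qd (None :: Ds) = Qd Ds.
Proof. by []. Qed.

Lemma dvd_Qd_a (a : R) Ds : ('X - a%:P) ^+ (count_mem (Some a) Ds) %| Qd Ds.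
Proof.
elim: Ds => [|[r|] Ds IH] /=; first by rewrite expr0 dvd1p.
- rewrite Qd_cons_Some; case: (eqVneq (Some r) (Some a)) => [[->]|_] /=.
    by rewrite add1n exprS dvdp_mul2l // polyXsubC_eq0.
  by rewrite add0n dvdp_mull.
- by rewrite Qd_cons_None.
Qed.

Lemma wfun_None Ds r : wfun None Ds r = (Qd Ds).[r].
Proof.
rewrite /wfun; elim: Ds => [|[c|] Ds IH]; first by rewrite big_nil /Qd big_nil hornerC.
- by rewrite big_cons Qd_cons_Some hornerM IH /ell /= mul1r hornerXsubC.
- by rewrite big_cons Qd_cons_None IH /ell /= mul1r.
Qed.

Lemma wfun_Some_fin Ds (a r : R) : r != a ->
  wfun (Some a) Ds (a - r)^-1 = ((a - r)^-1) ^+ (size Ds) * (Qd Ds).[r].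
Proof.
move=> ra; have ar0 : a - r != 0 by rewrite subr_eq0 eq_sym.
rewrite /wfun; elim: Ds => [|[c|] Ds IH]; first by rewrite big_nil /Qd big_nil hornerC mulr1.
- rewrite big_cons Qd_cons_Some hornerM IH /ell /= hornerXsubC exprS.
  case: (eqVneq (Some c) (Some a)) => [[->]|hc].
    rewrite eqxx; set u := (a - r)^-1 ^+ size Ds * _.
    have -> : -1 = (a - r)^-1 * (r - a) by field.
    by rewrite /u; ring.
  have hc' : (c == a) = false by apply/negbTE; apply: contra hc => /eqP ->.
  rewrite hc'; have ac0 : a - c != 0 by rewrite subr_eq0 eq_sym hc'.
  have -> : (a - c) * ((a - r)^-1 - (a - c)^-1) = (a - r)^-1 * (r - c).
    by field; rewrite ar0 ac0.
  by ring.
- by rewrite big_cons Qd_cons_None IH /ell /= mul1r subr0 exprS mulrA.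
Qed.

Lemma wfun_Some_0 Ds (a : R) : None \notin Ds ->
  wfun (Some a) Ds 0 = (-1) ^+ (size Ds).
Proof.
rewrite /wfun; elim: Ds => [|[c|] Ds IH]; first by rewrite big_nil.
- rewrite inE negb_or => /andP [_ hD]; rewrite big_cons IH // exprS /ell /=.
  case: (eqVneq (Some c) (Some a)) => [[->]|hc]; first by rewrite eqxx.
  have hc' : (c == a) = false by apply/negbTE; apply: contra hc => /eqP ->.
  rewrite hc'; have ac0 : a - c != 0 by rewrite subr_eq0 eq_sym hc'.
  by rewrite sub0r mulrN mulfV.
- by rewrite inE eqxx.
Qed.

Definition Tpol (a : R) (n : nat) (P : {poly R}) : {poly R} :=
  \sum_(i < n.+1) P`_i *: ((a *: 'X - 1) ^+ i * 'X ^+ (n - i)).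

Lemma Tpol_nz (a : R) (n : nat) (P : {poly R}) (y : R) : (size P <= n.+1)%N -> y != 0 ->
  (Tpol a n P).[y] = y ^+ n * P.[a - y^-1].
Proof.
move=> sP y0; rewrite (horner_coef_wide _ sP) mulr_sumr /Tpol horner_sum.
apply: eq_bigr => i _; rewrite hornerZ hornerM hornerXn horner_exp.
rewrite !hornerE /=.
have -> : y ^+ n = y ^+ i * y ^+ (n - i) by rewrite -exprD subnKC // -ltnS.
have -> : (a * y - 1) = (a - y^-1) * y by field.
rewrite exprMn; ring.
Qed.

Lemma Tpol_0 (a : R) (n : nat) (P : {poly R}) : (Tpol a n P).[0] = P`_n * (-1) ^+ n.
Proof.
rewrite /Tpol horner_sum big_ord_recr /= subnn expr0 mulr1 hornerZ.
rewrite big1 ?add0r; last first.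
  move=> i _; rewrite hornerZ hornerM hornerXn expr0n /=.
  by rewrite subn_eq0 leqNgt ltn_ord /= mulr0n !mulr0.
by rewrite horner_exp !hornerE /=.
Qed.

Lemma key_inj (xs x c : ext) : x != xs -> c != xs -> x != c -> key xs x != key xs c.
Proof.
case: xs x c => [a|] [r|] [c|] //= hx hc hxc.
- apply: contra hxc => /eqP /invr_inj => h.
  by apply/eqP; congr Some; lra.
- rewrite invr_eq0 subr_eq0 eq_sym; by apply: contra hx => /eqP ->.
- rewrite eq_sym invr_eq0 subr_eq0 eq_sym; by apply: contra hc => /eqP ->.
Qed.

Lemma alt_neg (T : {poly R}) (Fv : ext -> R) (xs : seq ext) Ds xstar j :
  (forall x, x \in xs -> x != xstar /\ x \notin Ds) ->
  (forall x, x \in xs -> T.[key xstar x] = Fv x * wfun xstar Ds (key xstar x)) ->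
  (forall j, (j < size xs)%N -> Fv (nth None xs j) =
     (-1) ^ ((size xs)%:Z - (j.+1)%:Z - (signS Ds xstar (nth None xs j))%:Z)) ->
  (j.+1 < size xs)%N ->
  T.[key xstar (nth None xs j)] * T.[key xstar (nth None xs j.+1)] < 0.
Proof.
move=> Hx HT HF hj.
have hj0 : (j < size xs)%N by apply: ltnW.
set x1 := nth None xs j; set x2 := nth None xs j.+1.
have m1 : x1 \in xs by apply: mem_nth.
have m2 : x2 \in xs by apply: mem_nth.
have [n1 d1] := Hx _ m1; have [n2 d2] := Hx _ m2.
set L := \prod_(c <- Ds) lam xstar c.
have hyp : forall x, x \in xs -> forall c, c \in Ds -> c != xstar -> key xstar x != key xstar c.
  move=> x xin c cD hc; have [nx dx] := Hx _ xin; apply: key_inj => //.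
  by apply: contraNneq dx => ->.
have p1 := w_sign _ _ _ (hyp _ m1); have p2 := w_sign _ _ _ (hyp _ m2).
rewrite -signS_count // in p1; rewrite -signS_count // in p2.
rewrite !HT // HF // HF // !neg1z.
have L0 : L != 0.
  rewrite prodf_seq_neq0; apply/allP => c _ /=; exact: lam_neq0.
have L2 : 0 < L ^+ 2 by rewrite exprn_even_gt0 //= L0 orbT.
rewrite -(pmulr_llt0 _ L2).
set S1 := signS Ds xstar x1; set S2 := signS Ds xstar x2.
set w1 := wfun xstar Ds (key xstar x1) in p1 *; set w2 := wfun xstar Ds (key xstar x2) in p2 *.
rewrite [(-1) ^+ j.+2]exprS.
have -> : (-1) ^+ size xs * (-1) ^+ j.+1 * (-1) ^+ S1 * w1 *
   ((-1) ^+ size xs * (-1 * (-1) ^+ j.+1) * (-1) ^+ S2 * w2) * L ^+ 2 =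
   - ((w1 * L * (-1) ^+ S1) * (w2 * L * (-1) ^+ S2)) *
   (((-1) ^+ size xs) ^+ 2 * ((-1) ^+ j.+1) ^+ 2 : R) by ring.
rewrite !sqrr_sign !mulr1 oppr_lt0; exact: mulr_gt0.
Qed.

Lemma max_sub (z : int) : Num.max 0 z - Num.max 0 (- z) = z.
Proof. by case: (ler0P z) => h; case: (ler0P (- z)) => h'; lia. Qed.

Lemma genD0E Ds (p q : {poly R}) x : genD0 Ds p q x = ordE p q x + (divD Ds x)%:Z.
Proof.
rewrite /genD0 /zeroE /poleE; have := max_sub (ordE p q x); lia.
Qed.

Lemma dvd_P_a (a : R) Ds (p q P : {poly R}) : q != 0 -> p != 0 -> P != 0 ->
  P * q = p * Qd Ds -> in_Ln Ds p q ->
  exists k : nat, ('X - a%:P) ^+ k %| P /\ genD0 Ds p q (Some a) <= k%:Z.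
Proof.
move=> q0 p0 P0 eP HL.
have cq0 : cpoly q != 0 by rewrite cpoly_eq0.
have cp0 : cpoly p != 0 by rewrite cpoly_eq0.
set mp := mup (a%:C)%C (cpoly p); set mq := mup (a%:C)%C (cpoly q).
set ca := count_mem (Some a) Ds.
set j := mup a q.
have hj : ('X - a%:P) ^+ j %| q by rewrite -mup_geq.
have jmq : (j <= mq)%N by rewrite /mq mup_geq // -cpoly_XsubCX cpoly_dvd.
have hp : ('X - a%:P) ^+ mp %| p by rewrite -cpoly_dvd cpoly_XsubCX -mup_geq.
set q2 := q %/ ('X - a%:P) ^+ j.
have eq2 : q = q2 * ('X - a%:P) ^+ j by rewrite divpK.
have nr : ~~ root q2 a.
  apply/negP => r2.
  have : ('X - a%:P) ^+ j.+1 %| q.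
    by rewrite exprS eq2 dvdp_mul // dvdp_XsubCl.
  by rewrite -mup_geq // ltnn.
have he : ('X - a%:P) ^+ (mp + ca) %| P * ('X - a%:P) ^+ j.
  have h1 : ('X - a%:P) ^+ (mp + ca) %| p * Qd Ds by rewrite exprD dvdp_mul // dvd_Qd_a.
  have cop : coprimep (('X - a%:P) ^+ (mp + ca)) q2.
    by apply: coprimep_expl; rewrite coprimep_sym coprimep_XsubC.
  by rewrite -eP eq2 mulrA mulrAC Gauss_dvdpl // in h1.
exists (mp + ca - j)%N; split.
  case: (leqP (mp + ca) j) => h; first by rewrite (eqP h) expr0 dvd1p.
  have nz : ('X - a%:P) ^+ j != 0 by rewrite expf_neq0 // polyXsubC_eq0.
  by rewrite -(dvdp_mul2r _ _ nz) -exprD subnK // ltnW.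
rewrite genD0E /= /ordC -/mp -/mq /divD -/ca; lia.
Qed.

Lemma size_rel (p q P Q : {poly R}) : p != 0 -> q != 0 -> P != 0 -> Q != 0 ->
  P * q = p * Q -> (size P + size q = size p + size Q)%N.
Proof.
move=> p0 q0 P0 Q0 e; have := congr1 (fun r : {poly R} => size r) e; rewrite !size_mul //.
have h1 : (0 < size p)%N by rewrite size_poly_gt0.
have h2 : (0 < size q)%N by rewrite size_poly_gt0.
have h3 : (0 < size P)%N by rewrite size_poly_gt0.
have h4 : (0 < size Q)%N by rewrite size_poly_gt0.
rewrite -!subn1.
move: h1 h2 h3 h4; set a := size p; set b := size q; set c := size P; set d := size Q.
lia.
Qed.



Lemma ratval_None_coef Ds n (p q P : {poly R}) v : size Ds = n ->
  count_mem None Ds = 0%N -> p != 0 -> q != 0 -> P != 0 ->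
  P * q = p * Qd Ds -> ratval p q None = Some v -> P`_n = v.
Proof.
move=> sD cN p0 q0 P0 eP.
have Q0 : Qd Ds != 0 := monic_neq0 (monic_Qd Ds).
have hs := size_rel _ _ _ _ p0 q0 P0 Q0 eP.
have sQ : size (Qd Ds) = n.+1.
  by rewrite size_Qd -sD -(size_pmap_None Ds) cN addn0.
rewrite /=; case: ifP => // hlt [<-].
case: (eqVneq (size p) (size q)) => hpq.
  have sP : size P = n.+1 by lia.
  have : lead_coef (P * q) = lead_coef (p * Qd Ds) by rewrite eP.
  rewrite !lead_coefM (monicP (monic_Qd Ds)) mulr1 => hl.
  rewrite lead_coefE sP /= in hl.
  have lq : lead_coef q != 0 by rewrite lead_coef_eq0.
  by rewrite -hl mulfK.
rewrite nth_default //; move: hlt hpq hs sQ.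
set a := size p; set b := size q; set c := size P; set d := size (Qd Ds).
move=> /negbT hlt /eqP hpq hs sQ; lia.
Qed.
End S.

Local Open Scope classical_set_scope.

Theorem theorem2p4 (R : realType) (E : set (ext R)) (n : nat)
    (Ds : seq (ext R)) (xstar : ext R) (p q : {poly R}) :
  compact E -> E <> setT -> infinite_set E ->
  (1 <= n)%N -> size Ds = n -> (forall c, c \in Ds -> ~ E c) ->
  ~ E xstar ->
  q != 0 -> coprimep p q ->
  in_Ln Ds p q ->
  (forall x, E x -> exists v, ratval p q x = Some v /\ `|v| <= 1) ->
  p != 0 ->
  forall xs : seq (ext R), alternation_set E Ds xstar p q xs ->
  (size xs)%:Z <= n%:Z + 1 - genD0 Ds p q xstar.
Proof.
move=> _ _ _ n1 sD DE xE q0 cpq HL Hbd p0 xs [XE [cyc Halt]].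
have [u srt] := (cyc_key R xstar xs).1 cyc.
have xsD : forall x, x \in xs -> x != xstar /\ x \notin Ds.
  move=> x xin; split.
    by move: u => /= /andP [nx _]; apply: contraNneq nx => <-.
  by apply/negP => xD; exact: (DE _ xD (XE _ xin)).
have dQ := q_dvd_Qd R Ds p q q0 cpq HL.
set P := p * (Qd R Ds %/ q).
have Q0 : Qd R Ds != 0 := monic_neq0 (monic_Qd R Ds).
have eP : P * q = p * Qd R Ds by rewrite /P -mulrA divpK.
have P0 : P != 0.
  rewrite /P mulf_neq0 //; apply: contraNneq Q0 => e.
  by rewrite -(divpK dQ) e mul0r.
have hs := size_rel R _ _ _ _ p0 q0 P0 Q0 eP.
have sQ : size (Qd R Ds) = (size (pmap id Ds)).+1 := size_Qd R Ds.
have sN := size_pmap_None R Ds.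
have hpole : (size p)%:Z - (size q)%:Z <= (count_mem None Ds)%:Z.
  have := HL.2; rewrite /pole_inf /ord_inf /divD => h; apply: le_trans h.
  by rewrite le_max opprB lexx orbT.
set Fv := fun x => odflt 0 (ratval p q x).
have HF : forall j, (j < size xs)%N -> Fv (nth None xs j) =
    (-1) ^ ((size xs)%:Z - (j.+1)%:Z - (signS Ds xstar (nth None xs j))%:Z).
  by move=> j hj; rewrite /Fv Halt.
have Hfin : forall r, Some r \in xs -> q.[r] != 0 /\ Fv (Some r) = p.[r] / q.[r].
  move=> r rin; have [v [hv _]] := Hbd _ (XE _ rin).
  by move: hv; rewrite /Fv /=; case: ifP => // /negbT h _; split.
have HPr : forall r, q.[r] != 0 -> P.[r] = p.[r] / q.[r] * (Qd R Ds).[r].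
  move=> r qr; have := congr1 (fun f : {poly R} => f.[r]) eP; rewrite /= !hornerM => e.
  by apply: (mulIf qr); rewrite e; field.
suff [T [HT Hcount]] : exists T : {poly R},
   (forall x, x \in xs -> T.[key R xstar x] = Fv x * wfun R xstar Ds (key R xstar x)) /\
   (forall zs, sorted <%R zs -> all (root T) zs ->
      (size zs)%:Z + genD0 Ds p q xstar <= n%:Z).
  case: xs u srt XE Halt xsD HF Hfin HT {cyc} => [|x0 xs'] u srt XE Halt xsD HF Hfin HT.
    by have := Hcount [::] isT isT; rewrite /=; lia.
  have pth : path (fun a b => T.[a] * T.[b] < 0) (key R xstar x0) (map (key R xstar) xs').
    apply/(pathP (key R xstar None)) => i hi.
    rewrite size_map in hi.
    have -> : nth (key R xstar None) (key R xstar x0 :: map (key R xstar) xs') i =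
              key R xstar (nth None (x0 :: xs') i).
      by rewrite -(nth_map None (key R xstar None)) //= ltnS ltnW.
    rewrite (nth_map None) //.
    exact: (alt_neg R T Fv (x0 :: xs') Ds xstar i xsD HT HF).
  have [zs [szs [pz rz]]] := ivt_chain R T _ _ srt pth.
  by have := Hcount zs (path_sorted pz) rz; rewrite szs size_map /=; lia.
case: xstar xE u srt cyc xsD HF Halt => [a|] xE u srt cyc xsD HF Halt; last first.
  exists P; split.
  - move=> x xin; have [nx _] := xsD _ xin; case: x xin nx => [r|] // rin _.
    have [qr ->] := Hfin _ rin.
    by rewrite /= wfun_None HPr.
  - move=> zs szs rzs.
    have uz := lt_sorted_uniq szs.
    have := max_poly_roots P0 rzs uz.
    rewrite genD0E /= /ord_inf /divD.
    move: hs sQ sN hpole; rewrite sD.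
    set A := size P; set B := size q; set C := size p; set D := size (Qd R Ds).
    set Z := size zs; set N0 := count_mem None Ds; set M := size (pmap id Ds).
    move=> *; lia.
have sPn : (size P <= n.+1)%N.
  move: hs sQ sN hpole; rewrite sD.
  set A := size P; set B := size q; set C := size p; set D := size (Qd R Ds).
  set N0 := count_mem None Ds; set M := size (pmap id Ds).
  move=> *; lia.
exists (Tpol R a n P); split.
- move=> x xin; have [nx dx] := xsD _ xin; case: x xin nx dx => [r|] xin nx dx.
  + have ra : r != a by apply: contra nx => /eqP ->.
    have y0 : (a - r)^-1 != 0 by rewrite invr_eq0 subr_eq0 eq_sym.
    rewrite /= Tpol_nz // invrK (_ : a - (a - r) = r); last by ring.
    rewrite wfun_Some_fin // sD; have [qr ->] := Hfin _ xin.
    rewrite HPr //; ring.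
  + rewrite /= Tpol_0 wfun_Some_0 // sD.
    have [v [hv _]] := Hbd _ (XE _ xin).
    have cN : count_mem None Ds = 0%N by apply/count_memPn.
    by rewrite /Fv hv /= (ratval_None_coef R Ds n p q P v sD cN p0 q0 P0 eP hv).
- move=> zs szs rzs.
  have [k [hk hg]] := dvd_P_a R a Ds p q P q0 p0 P0 eP HL.
  suff h : (size zs + k <= n)%N.
    move: hg h; set Z := size zs; set G := genD0 Ds p q (Some a). lia.
  set zs' := [seq z <- zs | z != 0].
  set xs0 := map (fun z => a - z^-1) zs'.
  set R' := P %/ ('X - a%:P) ^+ k.
  have eR : P = R' * ('X - a%:P) ^+ k by rewrite divpK.
  have R0 : R' != 0 by apply: contraNneq P0 => e; rewrite eR e mul0r.
  have Xk0 : ('X - a%:P) ^+ k != 0 by rewrite expf_neq0 // polyXsubC_eq0.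
  have sPR : size P = (size R' + k)%N.
    by rewrite eR size_mul // size_exp_XsubC addnS.
  have uz := lt_sorted_uniq szs.
  have rootsR : all (root R') xs0.
    apply/allP => x /mapP [z zin ->]; move: zin; rewrite mem_filter => /andP [z0 zin].
    have : root (Tpol R a n P) z := allP rzs z zin.
    rewrite /root Tpol_nz // mulf_eq0 expf_eq0 (negbTE z0) andbF /= eR hornerM mulf_eq0.
    case/orP => [//|]; rewrite horner_exp hornerXsubC expf_eq0 => /andP [_].
    rewrite addrAC subrr add0r oppr_eq0 invr_eq0 => /eqP ez.
    by move: z0; rewrite ez eqxx.
  have uxs0 : uniq xs0.
    rewrite map_inj_in_uniq ?filter_uniq // => z w _ _ e.
    by apply: invr_inj; apply: oppr_inj; apply: (addrI a).
  have hR := max_poly_roots R0 rootsR uxs0.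
  have szs' : size zs = (size zs' + count_mem (0%R : R) zs)%N.
    rewrite size_filter -(count_predC (fun z => z != 0) zs).
    have -> : count (predC (fun z => z != 0)) zs = count_mem (0%R : R) zs.
      by apply: eq_count => z /=; rewrite negbK.
    by [].
  rewrite (count_uniq_mem _ uz) in szs'.
  have sx : size xs0 = size zs' by rewrite size_map.
  case h0 : ((0%R : R) \in zs) in szs'.
    have Pn : P`_n = 0.
      have : root (Tpol R a n P) 0 := allP rzs 0 h0.
      by rewrite /root Tpol_0 mulf_eq0 signr_eq0 orbF => /eqP.
    have sPn' : size P != n.+1.
      by apply: contraNneq P0 => e; rewrite -lead_coef_eq0 lead_coefE e /= Pn.
    move: sPn sPn' sPR hR sx szs'; set A := size P; set B := size R'.
    set Z := size zs; set Z' := size zs'; set X0 := size xs0.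
    clear; move=> /= *; lia.
  move: sPn sPR hR sx szs'; set A := size P; set B := size R'.
  set Z := size zs; set Z' := size zs'; set X0 := size xs0.
  clear; move=> /= *; lia.
Qed.
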